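(* In the slot formulation of the weighted balls-into-bins process, for every $a$ with $0<a<\lambda/2$ and $Sa\le 1/2$, and every $t\ge0$, $$\mathbb E\left[\Psi(x^s(t+1))-\Psi(x^s(t))\,\middle|\,x^s(t)\right]\le\frac{3a}{2N}\Psi(x^s(t)).$$
   Context: Weighted balls into weighted bins: $n$ bins with positive integer weights $N_1,\dots,N_n$, $N=\sum_iN_i$; $\mathcal D$ on $[n]$ is $(\alpha,\beta)$-biased, i.e. $\frac{N_i}{\alpha N}\le\Pr_{\mathcal D}[i]\le\frac{\beta N_i}{N}$. Ball weights $w(t)$ are i.i.d. from $\mathcal W$ on $[0,\infty)$ with $\mathbb E[\mathcal W]=1$ and $M(z)=\mathbb E[e^{z\mathcal W}]$ finite at $z=\lambda$ for some $\lambda>0$; $S\ge1$ is a constant with $M''(z)\le2S$ for all $|z|<\lambda/2$. Each round two bins are sampled independently from $\mathcal D$ and the ball goes to the sampled bin with smaller value $v_i(t-1)=w_i(t-1)/N_i$. Slot formulation: bin $i$ consists of $N_i$ unit slots; the normalized slot vector $x^s(t)\in\mathbb R^N$ has, for each slot of bin $i$, the entry $v_i(t)-\frac1N\sum_{t'\le t}w(t')$, indexed so that $x^s_1(t)\ge\dots\ge x^s_N(t)$. $\Psi(y)=\sum_je^{-ay_j}$. *)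

(* Defs.v *)
From HB Require Import structures.
From mathcomp Require Import all_boot all_order all_algebra.
From mathcomp Require Import all_classical all_reals all_analysis.
Set Implicit Arguments. Unset Strict Implicit. Unset Printing Implicit Defensive.
Import Order.TTheory GRing.Theory Num.Theory.
Local Open Scope ring_scope.

Section BB.
Variables (R : realType) (n : nat) (Nw : 'I_n -> nat).

Definition Ntot : nat := (\sum_(i < n) Nw i)%N.

(* slots: bin i consists of N_i unit slots *)
Definition slot := {i : 'I_n & 'I_(Nw i)}.

Definition value (load : 'I_n -> R) (i : 'I_n) : R := load i / (Nw i)%:R.

Definition total_weight (load : 'I_n -> R) : R := \sum_(i < n) load i.

(* normalized slot vector x^s(t) (unsorted; sorting does not affect Psi) *)
Definition xs (load : 'I_n -> R) (s : slot) : R :=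
  value load (tag s) - total_weight load / (Ntot)%:R.

Definition Psi (a : R) (load : 'I_n -> R) : R :=
  \sum_(s : slot) expR (- a * xs load s).

Definition chosen (tb : 'I_n -> 'I_n -> bool) (load : 'I_n -> R)
    (i j : 'I_n) : 'I_n :=
  if value load i < value load j then i
  else if value load j < value load i then j
  else if tb i j then i else j.

Definition allocate (load : 'I_n -> R) (k : 'I_n) (w : R) : 'I_n -> R :=
  fun i => if i == k then load i + w else load i.

Definition biased (alpha beta : R) (p : 'I_n -> R) : Prop :=
  forall i, (Nw i)%:R / (alpha * (Ntot)%:R) <= p i /\
            p i <= beta * (Nw i)%:R / (Ntot)%:R.

(* E[Psi(x^s(t+1)) | state at time t]: two bins sampled independently from p,
   ball weight drawn from P independently *)
Definition expected_next_Psi (d : measure_display) (T : measurableType d)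
    (P : probability T R) (wt : T -> R) (tb : 'I_n -> 'I_n -> bool)
    (p : 'I_n -> R) (a : R) (load : 'I_n -> R) : \bar R :=
  (\sum_(i < n) \sum_(j < n)
     (p i * p j)%:E *
       \int[P]_x (Psi a (allocate load (chosen tb load i j) (wt x)))%:E)%E.

End BB.

Definition mgf (R : realType) (P : probability R R) (z : R) : R :=
  fine (\int[P]_x (expR (z * x))%:E)%E.

(* Main.v *)
Require Import Defs.
From HB Require Import structures.
From mathcomp Require Import all_boot all_order all_algebra.
From mathcomp Require Import all_classical all_reals all_analysis.
From mathcomp Require Import measurable_realfun.
From mathcomp Require Import ring lra.
Import Order.TTheory GRing.Theory Num.Theory.
Import numFieldNormedType.Exports.
Local Open Scope ring_scope.
Local Open Scope classical_set_scope.

Section Taylor.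
Variables (R : realType) (P : probability R R).
Hypothesis Pneg : P [set x : R | x < 0] = 0%E.

Definition yp (y : R) : R := Num.max y 0.

Lemma continuous_yp : continuous yp.
Proof.
have -> : yp = (id \max cst 0) by [].
apply: max_fun_continuous => // x; [exact: cvg_id | exact: cvg_cst].
Qed.

Lemma cmeas (g : R -> R) : continuous g -> measurable_fun setT (EFin \o g).
Proof. by move=> cg; apply/measurable_EFinP; exact: continuous_measurable_fun. Qed.

Lemma mneg : measurable [set x : R | x < 0].
Proof.
have -> : [set x : R | x < 0] = `]-oo, (0:R)[%classic.
  by apply/seteqP; split => x /=; rewrite ?inE /= ?in_itv /= ?andbT //=.
exact: measurable_itv.
Qed.

Lemma ae_yp (g : R -> R) : continuous g ->
  (\int[P]_x (g x)%:E = \int[P]_x (g (yp x))%:E)%E.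
Proof.
move=> cg.
apply: (ae_eq_integral (fun x => (g (yp x))%:E)) => //.
- exact: cmeas.
- apply: cmeas => x; apply: continuous_comp; [exact: continuous_yp|exact: cg].
- exists [set x : R | x < 0]; split => //.
  + exact: mneg.
  + move=> x /= H; apply: contrapT => Hx; apply: H => _.
    by rewrite /yp max_l // leNgt; apply/negP.
Qed.
Lemma is_derive_expM (c x : R) :
  is_derive x 1 (fun z => expR (z * c)) (c * expR (x * c)).
Proof.
have hl : is_derive x 1 (fun z : R => c * z) c.
  have := is_deriveZ c (@is_derive_id _ _ x 1).
  by rewrite /GRing.scale /= mulr1.
have -> : (fun z => expR (z * c)) = expR \o (fun z : R => c * z).
  by apply/funext => z /=; rewrite mulrC.
have dl : derivable (fun z : R => c * z) x 1 by case: hl.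
have de : derivable (@expR R) (c * x) 1 by exact: derivable_expR.
apply: DeriveDef.
  apply/derivable1_diffP; apply: differentiable_comp.
    exact/derivable1_diffP.
  exact/derivable1_diffP.
rewrite -derive1E derive1_comp // !derive1E.
rewrite (@derive_val _ _ _ _ _ _ _ hl) (@derive_val _ _ _ _ _ _ _ (is_derive_expR _)).
by rewrite mulrC (mulrC c x).
Qed.

Variables (lam S : R).
Hypothesis lam0 : 0 < lam.
Hypothesis hfin : (\int[P]_x (expR (lam * x))%:E < +oo)%E.

Let L := lam / 2.
Let L0 : 0 < L. Proof. by rewrite /L divr_gt0. Qed.

Definition Eb (y : R) : R := expR (lam * yp y).
Definition Gk (k : nat) (z y : R) : R := yp y ^+ k * expR (z * yp y).

Lemma yp_ge0 y : 0 <= yp y.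
Proof. by rewrite /yp le_max lexx orbT. Qed.

Lemma measurable_yp : measurable_fun setT yp.
Proof. exact: continuous_measurable_fun continuous_yp. Qed.

Lemma measurable_Gk k z : measurable_fun setT (Gk k z).
Proof.
rewrite /Gk; apply: (measurable_funM (f := fun y => yp y ^+ k) (g := fun y => expR (z * yp y))).
  exact: (measurable_funX k measurable_yp).
apply: measurableT_comp => //.
exact: (measurable_funM (f := cst z) (g := yp) (measurable_cst _) measurable_yp).
Qed.

Lemma intE : P.-integrable setT (EFin \o Eb).
Proof.
apply/integrableP; split.
  apply/measurable_EFinP; apply: measurableT_comp => //.
  exact: (measurable_funM (f := cst lam) (g := yp) (measurable_cst _) measurable_yp).
rewrite (eq_integral (fun x => (expR (lam * yp x))%:E)); last first.
  by move=> x _ /=; rewrite ger0_norm // expR_ge0.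
rewrite -(@ae_yp (fun x => expR (lam * x))) //.
move=> x; apply: continuous_comp; last exact: continuous_expR.
exact: (@continuousM _ _ (cst lam) id x (cvg_cst _) cvg_id).
Qed.

Lemma pow_le_exp k c : 0 <= c -> c ^+ k <= k`!%:R / L ^+ k * expR (L * c).
Proof.
move=> c0.
have Lc0 : 0 <= L * c by rewrite mulr_ge0 // ltW.
case: k => [|n].
  by rewrite expr0 fact0 expr0 divr1 mul1r -expR0 ler_expR.
have h := expR_ge1Dxn n Lc0.
have h2 : (L * c) ^+ n.+1 / n.+1`!%:R <= expR (L * c).
  by apply: le_trans h; rewrite lerDr.
have fpos : 0 < n.+1`!%:R :> R by rewrite ltr0n fact_gt0.
have Lpos : 0 < L ^+ n.+1 by rewrite exprn_gt0.
have -> : c ^+ n.+1 = n.+1`!%:R / L ^+ n.+1 * ((L * c) ^+ n.+1 / n.+1`!%:R).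
  rewrite [(L * c) ^+ _]exprMn.
  move: (L ^+ n.+1) Lpos (n.+1`!%:R) fpos => X Xp F Fp.
  by field; rewrite ?gt_eqF.
by apply: ler_wpM2l => //; rewrite divr_ge0 // ltW.
Qed.

Lemma Gk_bound k z y : z <= L -> 0 <= Gk k z y <= k`!%:R / L ^+ k * Eb y.
Proof.
move=> zL; have c0 := yp_ge0 y.
apply/andP; split.
  by rewrite /Gk mulr_ge0 ?exprn_ge0 ?expR_ge0.
rewrite /Gk /Eb.
have -> : lam * yp y = L * yp y + L * yp y.
  by rewrite -mulrDl /L -splitr.
rewrite expRD mulrA.
apply: ler_pM; rewrite ?exprn_ge0 ?expR_ge0 //.
  exact: pow_le_exp.
by rewrite ler_expR ler_wpM2r.
Qed.

Lemma intCE C : P.-integrable setT (EFin \o (fun y => C * Eb y)).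
Proof. exact: (integrableZl measurableT C intE). Qed.

Lemma intGk k z : z <= L -> P.-integrable setT (EFin \o Gk k z).
Proof.
move=> zL.
apply: (le_integrable measurableT _ _ (intCE (k`!%:R / L ^+ k))).
  by apply/measurable_EFinP; exact: measurable_Gk.
move=> y _ /=; rewrite lee_fin.
have /andP[h1 h2] := @Gk_bound k z y zL.
by rewrite ger0_norm // ger0_norm //; exact: le_trans h1 h2.
Qed.

Definition Fk k z := Rintegral P setT (Gk k z).

Lemma Gk_derive (k : nat) (z y : R) : is_derive z 1 (Gk k ^~ y) (Gk k.+1 z y).
Proof.
have h := is_deriveZ (yp y ^+ k) (is_derive_expM (yp y) z).
have -> : Gk k ^~ y = (yp y ^+ k) \*: (fun z => expR (z * yp y)) by [].
by rewrite /Gk exprS (mulrC (yp y)) -mulrA.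
Qed.

Lemma d1Gk (k : nat) (x y : R) : partial1of2 (Gk k) x y = Gk k.+1 x y.
Proof. by rewrite partial1of2E (@derive_val _ _ _ _ _ _ _ (Gk_derive k x y)). Qed.

Lemma Fk_derive (k : nat) (x : R) : -L < x < L -> is_derive x 1 (Fk k) (Fk k.+1 x).
Proof.
move=> /andP[xl xr].
have Ix : `]-L, L[%classic x by rewrite /= in_itv /= xl xr.
have intf : forall x, `]-L, L[%classic x -> P.-integrable setT (EFin \o Gk k x).
  move=> t /=; rewrite in_itv /= => /andP[_ tL]; exact/intGk/ltW.
have derf : forall t y, `]-L, L[%classic t -> setT y -> derivable (Gk k ^~ y) t 1.
  by move=> t y _ _; case: (Gk_derive k t y).
have G0 : forall y, 0 <= k.+1`!%:R / L ^+ k.+1 * Eb y.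
  by move=> y; rewrite mulr_ge0 ?expR_ge0 // divr_ge0 // ?exprn_ge0 // ltW.
have Gub : forall t y, `]-L, L[%classic t -> setT y ->
    `|partial1of2 (Gk k) t y| <= k.+1`!%:R / L ^+ k.+1 * Eb y.
  move=> t y /=; rewrite in_itv /= => /andP[_ tL] _.
  rewrite d1Gk; have /andP[h1 h2] := @Gk_bound k.+1 t y (ltW tL).
  by rewrite ger0_norm.
apply: DeriveDef.
  exact: (derivable_under_integral measurableT Ix intf derf G0 (intCE _) Gub).
rewrite -derive1E.
rewrite (differentiation_under_integral measurableT Ix intf derf G0 (intCE _) Gub).
by apply: eq_Rintegral => y _; rewrite d1Gk.
Qed.

Lemma cont_expM (z : R) : continuous (fun x : R => expR (z * x)).
Proof.
move=> x; apply: continuous_comp; last exact: continuous_expR.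
exact: (@continuousM _ _ (cst z) id x (cvg_cst _) cvg_id).
Qed.

Lemma mgfE : mgf P = Fk 0.
Proof.
apply/funext => z; rewrite /mgf (@ae_yp (fun x => expR (z * x))) ?cont_expM //.
  rewrite /Fk /Rintegral; congr fine; apply: eq_integral => y _.
  by rewrite /Gk expr0 mul1r.
exact: cont_expM.
Qed.

Lemma int_exp z : z <= L -> (\int[P]_x (expR (z * x))%:E = (Fk 0 z)%:E)%E.
Proof.
move=> zL; rewrite (@ae_yp (fun x => expR (z * x))); last exact: cont_expM.
have -> : (\int[P]_x (expR (z * yp x))%:E = \int[P]_x (Gk 0 z x)%:E)%E.
  by apply: eq_integral => y _; rewrite /Gk expr0 mul1r.
rewrite /Fk /Rintegral fineK //.
by have := integrable_fin_num measurableT (@intGk 0 z zL).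
Qed.

Lemma Fk00 : Fk 0 0 = 1.
Proof.
rewrite /Fk /Rintegral (eq_integral (fun _ => 1%:E)); last first.
  by move=> y _; rewrite /Gk expr0 mul0r expR0 mulr1.
rewrite integral_cst // mul1e.
apply: (@eq_trans _ _ (fine 1%E)); last by [].
congr fine; exact: probability_setT.
Qed.

Hypothesis hmean : (\int[P]_x x%:E = 1%:E)%E.

Lemma Fk10 : Fk 1 0 = 1.
Proof.
rewrite /Fk /Rintegral (eq_integral (fun y => (yp y)%:E)); last first.
  by move=> y _; rewrite /Gk expr1 mul0r expR0 mulr1.
have := @ae_yp id (fun x => cvg_id); rewrite /= hmean => <- //.
Qed.

Lemma D2mgf x : -L < x < L -> derive1 (derive1 (mgf P)) x = Fk 2 x.
Proof.
move=> xI.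
have xI' : x \in `]-L, L[%R by rewrite in_itv.
have hn : \forall t \near x, derive1 (mgf P) t = Fk 1 t.
  apply: filterS (near_in_itvoo xI') => t; rewrite in_itv /= => tI.
  by rewrite mgfE derive1E (@derive_val _ _ _ _ _ _ _ (@Fk_derive 0 t tI)).
rewrite derive1E (near_eq_derive _ hn).
by rewrite (@derive_val _ _ _ _ _ _ _ (@Fk_derive 1 x xI)).
Qed.

Definition btw (x y t : R) := (x <= t <= y) || (y <= t <= x).

Lemma mvt2 (f df : R -> R) (x y : R) :
  (forall t, btw x y t -> is_derive t 1 f (df t)) ->
  exists c, btw x y c /\ f y - f x = df c * (y - x).
Proof.
move=> hd.
have hcont : forall a b : R, a <= b -> (forall t : R, a <= t <= b -> is_derive t 1 f (df t)) ->
    exists2 c, c \in `[a, b]%R & f b - f a = df c * (b - a).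
  move=> a b ab hab; apply: MVT_segment => //.
    move=> t; rewrite in_itv /= => /andP[h1 h2]; apply: hab.
    by rewrite !ltW.
  apply: derivable_within_continuous => t; rewrite in_itv /= => ht.
  by case: (hab t ht).
case: (leP x y) => xy.
  have [|c c1 c2] := hcont x y xy.
    by move=> t ht; apply: hd; rewrite /btw ht.
  by exists c; split => //; move: c1; rewrite in_itv /btw => ->.
have yx := ltW xy.
have [|c c1 c2] := hcont y x yx.
  by move=> t ht; apply: hd; rewrite /btw ht orbT.
exists c; split; first by move: c1; rewrite in_itv /btw => ->; rewrite orbT.
by rewrite -opprB c2 -mulrN opprB.
Qed.

Lemma btw_norm (z t : R) : btw 0 z t -> `|t| <= `|z| /\ 0 <= t * z /\ t * z <= z ^+ 2.
Proof.
rewrite /btw => /orP[] /andP[h1 h2].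
  have z0 : 0 <= z by exact: le_trans h2.
  rewrite !ger0_norm //; split => //; split; nra.
have z0 : z <= 0 by exact: le_trans h2.
rewrite !ler0_norm // ?lerN2 //; split => //; split; nra.
Qed.


Hypothesis hM2 : forall z : R, `|z| < lam / 2 -> derive1 (derive1 (mgf P)) z <= 2 * S.
Hypothesis S0 : 0 <= S.

Lemma taylor z : `|z| < L -> Fk 0 z <= 1 + z + 2 * S * z ^+ 2.
Proof.
move=> zL.
have inI : forall t, `|t| <= `|z| -> - L < t < L.
  move=> t tz; have : `|t| < L by exact: le_lt_trans zL.
  by rewrite ltr_norml.
have hd0 : forall t, btw 0 z t -> is_derive t 1 (Fk 0) (Fk 1 t).
  move=> t /(@btw_norm _ t) [h _]; apply: Fk_derive; exact: inI.
have [c [hc hc2]] := @mvt2 (Fk 0) (Fk 1) 0 z hd0.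
have [cz [cz0 czz]] := @btw_norm z c hc.
have hd1 : forall t, btw 0 c t -> is_derive t 1 (Fk 1) (Fk 2 t).
  move=> t /(@btw_norm _ t) [h _]; apply: Fk_derive; apply: inI; exact: le_trans cz.
have [d [hd hd2]] := @mvt2 (Fk 1) (Fk 2) 0 c hd1.
have dI : - L < d < L.
  have [h _] := @btw_norm c d hd; apply: inI; exact: le_trans cz.
have F2 : Fk 2 d <= 2 * S.
  rewrite -D2mgf //; apply: hM2; rewrite ltr_norml; exact: dI.
move: hc2 hd2; rewrite Fk00 Fk10 !subr0 => e1 e2.
have -> : Fk 0 z = 1 + z + Fk 2 d * (c * z).
  by rewrite -(subrK 1 (Fk 0 z)) e1 -(subrK 1 (Fk 1 c)) e2; ring.
suff : Fk 2 d * (c * z) <= 2 * S * z ^+ 2 by lra.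
apply: (le_trans (ler_wpM2r cz0 F2)); rewrite ler_wpM2l // mulr_ge0 //.
Qed.

End Taylor.

Section Main.
Variables (R : realType) (n : nat) (Nw : 'I_n -> nat).
Hypothesis Npos : forall i, (0 < Nw i)%N.

Let N := (Ntot Nw)%:R : R.

Lemma tw_alloc (load : 'I_n -> R) k w :
  total_weight (allocate load k w) = total_weight load + w.
Proof.
rewrite /total_weight /allocate (bigD1 k) //= eqxx [in RHS](bigD1 k) //=.
rewrite -addrA (addrC w) addrA; congr (_ + _ + _).
by apply: eq_bigr => i /negbTE ->.
Qed.

Lemma xs_alloc (load : 'I_n -> R) k w (s : slot Nw) :
  xs (allocate load k w) s =
  xs load s + (if tag s == k then w / (Nw (tag s))%:R else 0) - w / N.
Proof.
rewrite /xs /value tw_alloc /allocate.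
by case: eqP => _; rewrite !mulrDl; ring.
Qed.

Definition zs (a : R) (k : 'I_n) (s : slot Nw) : R :=
  a / N - (if tag s == k then a / (Nw (tag s))%:R else 0).

Lemma Psi_alloc a (load : 'I_n -> R) k w :
  Psi Nw a (allocate load k w) =
  \sum_(s : slot Nw) expR (- a * xs load s) * expR (zs a k s * w).
Proof.
apply: eq_bigr => s _; rewrite xs_alloc -expRD /zs; congr expR.
by case: ifP => _; ring.
Qed.

End Main.

Lemma arith1 (R : realType) (a N Ni lam S : R) : 0 < a -> 1 <= Ni -> Ni <= N ->
  a < lam / 2 -> 0 <= S -> S * a <= 1 / 2 ->
  `|a / N - a / Ni| < lam / 2 /\
  1 + (a / N - a / Ni) + 2 * S * (a / N - a / Ni) ^+ 2 <= 1 + 3 * a / (2 * N).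
Proof.
move=> a0 Ni1 NiN aL S0 Sa.
have N0 : 0 < N by lra.
have Ni0 : 0 < Ni by lra.
have u1 : a / Ni <= a by rewrite ler_pdivrMr //; rewrite ler_peMr // ltW.
have uv : a / N <= a / Ni by rewrite ler_pM2l // lef_pV2 // posrE.
have v0 : 0 < a / N by rewrite divr_gt0.
move: u1 uv v0; set u := a / Ni; set v := a / N => u1 uv v0.
have h3 : 0 <= 3 * a / (2 * N) by rewrite divr_ge0 ?mulr_ge0 //; lra.
move: h3; set w := 3 * a / (2 * N) => h3.
split.
  rewrite ltr_norml; apply/andP; split; lra.
have h1 : 0 <= 1 + 2 * S * (v - u) by nra.
nra.
Qed.

Lemma arith2 (R : realType) (a N lam S : R) : 0 < a -> 2 <= N ->
  a < lam / 2 -> 0 <= S -> S * a <= 1 / 2 ->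
  `|a / N - 0| < lam / 2 /\
  1 + (a / N - 0) + 2 * S * (a / N - 0) ^+ 2 <= 1 + 3 * a / (2 * N).
Proof.
move=> a0 N2 aL S0 Sa.
have N0 : 0 < N by lra.
have v0 : 0 < a / N by rewrite divr_gt0.
have vle : a / N <= a / 2 by rewrite ler_pM2l // lef_pV2 // posrE; lra.
have Sv : S * (a / N) <= 1 / 4.
  have -> : S * (a / N) = (S * a) / N by rewrite mulrA.
  rewrite ler_pdivrMr //; nra.
have -> : 3 * a / (2 * N) = 3 / 2 * (a / N) by field; lra.
rewrite subr0; move: vle v0 Sv; set v := a / N => vle v0 Sv.
split.
  rewrite ger0_norm; lra.
nra.
Qed.

Section Step.
Variables (R : realType) (n : nat) (Nw : 'I_n -> nat).
Hypothesis Npos : forall i, (0 < Nw i)%N.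
Variables (P : probability R R) (lam S a : R).
Hypothesis Pneg : P [set x : R | x < 0] = 0%E.
Hypothesis hmean : (\int[P]_x x%:E = 1%:E)%E.
Hypothesis lam0 : 0 < lam.
Hypothesis hfin : (\int[P]_x (expR (lam * x))%:E < +oo)%E.
Hypothesis S1 : 1 <= S.
Hypothesis hM2 : forall z : R, `|z| < lam / 2 -> derive1 (derive1 (mgf P)) z <= 2 * S.
Hypothesis a0 : 0 < a.
Hypothesis aL : a < lam / 2.
Hypothesis Sa : S * a <= 1 / 2.

Notation zs_ := (@zs R n Nw).

Lemma Nle i : (Nw i <= Ntot Nw)%N.
Proof. by rewrite /Ntot (bigD1 i) //= leq_addr. Qed.

Lemma Nle2 i k : i != k -> (Nw i + Nw k <= Ntot Nw)%N.
Proof.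
move=> ik; rewrite /Ntot (bigD1 i) //= leq_add2l (bigD1 k) /=; last by rewrite eq_sym.
exact: leq_addr.
Qed.

Lemma zs_bound k (s : slot Nw) :
  `|zs_ a k s| < lam / 2 /\
  1 + zs_ a k s + 2 * S * zs_ a k s ^+ 2 <= 1 + 3 * a / (2 * (Ntot Nw)%:R).
Proof.
have Ni1 : 1 <= (Nw (tag s))%:R :> R by rewrite ler1n Npos.
have NiN : (Nw (tag s))%:R <= (Ntot Nw)%:R :> R by rewrite ler_nat Nle.
have S0 : 0 <= S by apply: le_trans S1.
rewrite /zs; case: eqP => [ek|nek].
  exact: arith1.
apply: arith2 => //.
have h := @Nle2 (tag s) k (introN eqP nek).
have h2 : (2 <= Ntot Nw)%N.
  by apply: leq_trans h; rewrite -(addn1 1) leq_add // Npos.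
by rewrite (ler_nat R 2).
Qed.

Lemma int_exp_le z : `|z| < lam / 2 ->
  (\int[P]_x (expR (z * x))%:E <= (1 + z + 2 * S * z ^+ 2)%:E)%E.
Proof.
move=> zL.
have zL' : z <= lam / 2 by apply: ltW; apply: le_lt_trans zL; exact: ler_norm.
have S0 : 0 <= S by apply: le_trans S1.
rewrite (@int_exp R P Pneg lam lam0 hfin z zL') lee_fin.
exact: (@taylor R P Pneg lam S lam0 hfin hmean hM2 S0 z zL).
Qed.

Lemma step (load : 'I_n -> R) k :
  (\int[P]_x (Psi Nw a (allocate load k x))%:E <=
     ((1 + 3 * a / (2 * (Ntot Nw)%:R)) * Psi Nw a load)%:E)%E.
Proof.
rewrite (eq_integral (fun x => \sum_(s : slot Nw)
    (expR (- a * xs load s) * expR (zs_ a k s * x))%:E)); last first.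
  by move=> x _; rewrite Psi_alloc sumEFin.
have f0 : forall (s : slot Nw) x, setT x ->
    (0 <= (expR (- a * xs load s) * expR (zs_ a k s * x))%:E)%E.
  by move=> s x _; rewrite lee_fin mulr_ge0 ?expR_ge0.
have mf : forall (s : slot Nw), measurable_fun setT
    (fun x => (expR (- a * xs load s) * expR (zs_ a k s * x))%:E).
  move=> s; apply/measurable_EFinP.
  apply: continuous_measurable_fun => x.
  exact: (@continuousM _ _ (cst (expR (- a * xs load s))) (fun x => expR (zs_ a k s * x)) x (cvg_cst _) (@cont_expM R (zs_ a k s) x)).
rewrite (@ge0_integral_sum _ _ _ P setT measurableT _ _ mf f0).
rewrite /Psi mulr_sumr -sumEFin; apply: lee_sum => s _.
rewrite (eq_integral (fun x => ((expR (- a * xs load s))%:E * (expR (zs_ a k s * x))%:E)%E)); last first.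
  by move=> x _; rewrite EFinM.
rewrite ge0_integralZl_EFin //; last first.
  by apply/measurable_EFinP; apply: continuous_measurable_fun; exact: cont_expM.
rewrite (mulrC (1 + _)) EFinM; apply: (lee_wpmul2l _); first by rewrite lee_fin expR_ge0.
have [zl zb] := zs_bound k s.
apply: (le_trans (@int_exp_le (zs_ a k s) zl)).
by rewrite lee_fin.
Qed.

End Step.

Theorem mainTheorem10 (R : realType) (n : nat) (Nw : 'I_n -> nat)
    (alpha beta : R) (p : 'I_n -> R) (P : probability R R)
    (lam S a : R) (tb : 'I_n -> 'I_n -> bool) (load : 'I_n -> R) :
  (forall i, (0 < Nw i)%N) ->
  0 < alpha -> 0 < beta ->
  (forall i, 0 <= p i) -> \sum_(i < n) p i = 1 ->
  biased Nw alpha beta p ->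
  P [set x : R | x < 0]%classic = 0%E ->
  (\int[P]_x x%:E = 1%:E)%E ->
  0 < lam ->
  (\int[P]_x (expR (lam * x))%:E < +oo)%E ->
  1 <= S ->
  (forall z : R, `|z| < lam / 2 -> derive1 (derive1 (mgf P)) z <= 2 * S) ->
  (forall i, 0 <= load i) ->
  0 < a -> a < lam / 2 -> S * a <= 1 / 2 ->
  (expected_next_Psi Nw P id tb p a load - (Psi Nw a load)%:E <=
     (3 * a / (2 * (Ntot Nw)%:R) * Psi Nw a load)%:E)%E.
Proof.
move=> Npos _ _ p0 p1 _ Pneg hmean lam0 hfin S1 hM2 _ a0 aL Sa.
set K := 1 + 3 * a / (2 * (Ntot Nw)%:R).
set Ps := Psi Nw a load.
have hE : (expected_next_Psi Nw P id tb p a load <= (K * Ps)%:E)%E.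
  rewrite /expected_next_Psi.
  apply: (@le_trans _ _ (\sum_(i < n) \sum_(j < n) (p i * p j)%:E * (K * Ps)%:E)%E).
    apply: lee_sum => i _; apply: lee_sum => j _.
    apply: (lee_wpmul2l _); first by rewrite lee_fin mulr_ge0.
    exact: (@step R n Nw Npos P lam S a Pneg hmean lam0 hfin S1 hM2 a0 aL Sa load).
  under eq_bigr do under eq_bigr do rewrite -EFinM.
  under eq_bigr do rewrite sumEFin.
  rewrite sumEFin lee_fin.
  have -> : \sum_(i < n) \sum_(j < n) p i * p j * (K * Ps) = (\sum_(i < n) p i) * (\sum_(j < n) p j) * (K * Ps).
    rewrite -mulrA mulr_suml; apply: eq_bigr => i _.
    rewrite mulr_suml mulr_sumr; apply: eq_bigr => j _.
    by rewrite -mulrA.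
  have -> : \sum_(i < n) p i = 1 by exact: p1.
  by rewrite !mul1r.
rewrite leeBlDr // -EFinD.
apply: le_trans hE _.
by rewrite lee_fin /K mulrDl mul1r addrC.
Qed.
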